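(* Let $T$ be a triangle which has no right angle and is not of type $(120^\circ,30^\circ,30^\circ)$. Then the 3-graph $K_4^{3-}$ with vertex set $[4]$ and edges $123,124,134$ is forbidden for $T$.
   Context: A 3-graph is a 3-uniform hypergraph; $G$ is $F$-free if it has no (not necessarily induced) subhypergraph isomorphic to $F$. A triangle is of type $(\alpha,\beta,\gamma)$ if $\alpha\ge\beta\ge\gamma$ are its interior angles in degrees. For a triangle $T$ with side lengths $a,b,c$ and $\varepsilon>0$, with $\varepsilon'=\varepsilon\min\{a,b,c\}$, a triangle $A'B'C'$ is $\varepsilon$-congruent to $T$ if there are $A,B,C\in\mathbb{R}^2$ with $ABC$ congruent to $T$ and $A',B',C'$ within distance $\varepsilon'$ of $A,B,C$ respectively. For finite $P\subseteq\mathbb{R}^2$, $\mathcal{H}(T,P,\varepsilon)$ is the 3-graph on $P$ whose edges are triples forming triangles $\varepsilon$-congruent to $T$. A 3-graph $H$ is forbidden for $T$ if there exists $\varepsilon>0$ such that for every $P\subseteq\mathbb{R}^2$ with $|P|=|V(H)|$, $\mathcal{H}(T,P,\varepsilon)$ is $H$-free. *)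

(* Defs.v *)
From Stdlib Require Import Reals List Permutation.
Open Scope R_scope.

Definition point : Type := (R * R)%type.

Definition dist2 (p q : point) : R :=
  sqrt ((fst p - fst q) ^ 2 + (snd p - snd q) ^ 2).

Record tri3 := Tri { sa : R; sb : R; sc : R }.

Definition is_triangle (T : tri3) : Prop :=
  0 < sa T /\ 0 < sb T /\ 0 < sc T /\
  sa T < sb T + sc T /\ sb T < sa T + sc T /\ sc T < sa T + sb T.

(* interior angles (radians), by the law of cosines: angle opposite a, b, c *)
Definition angA (T : tri3) : R :=
  acos ((sb T ^ 2 + sc T ^ 2 - sa T ^ 2) / (2 * sb T * sc T)).
Definition angB (T : tri3) : R :=
  acos ((sa T ^ 2 + sc T ^ 2 - sb T ^ 2) / (2 * sa T * sc T)).
Definition angC (T : tri3) : R :=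
  acos ((sa T ^ 2 + sb T ^ 2 - sc T ^ 2) / (2 * sa T * sb T)).

Definition deg (d : R) : R := d * PI / 180.

Definition has_right_angle (T : tri3) : Prop :=
  angA T = deg 90 \/ angB T = deg 90 \/ angC T = deg 90.

(* T is of type (alpha, beta, gamma): its angles, sorted decreasingly, are
   alpha >= beta >= gamma (given in degrees). *)
Definition of_type (T : tri3) (al be ga : R) : Prop :=
  exists x y z : R,
    Permutation (angA T :: angB T :: angC T :: nil) (x :: y :: z :: nil) /\
    x = deg al /\ y = deg be /\ z = deg ga.

(* ABC is congruent to T: the side lengths of ABC are those of T, up to
   relabelling (SSS). *)
Definition congruent (A B C : point) (T : tri3) : Prop :=
  Permutation (dist2 B C :: dist2 C A :: dist2 A B :: nil)
              (sa T :: sb T :: sc T :: nil).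

Definition eps_congruent (T : tri3) (eps : R) (A' B' C' : point) : Prop :=
  let eps' := eps * Rmin (sa T) (Rmin (sb T) (sc T)) in
  exists A B C : point, congruent A B C T /\
    dist2 A A' <= eps' /\ dist2 B B' <= eps' /\ dist2 C C' <= eps'.

(* Edge relation of the 3-graph H(T, P, eps) on the finite point set P
   (given as a duplicate-free list). *)
Definition HT_edge (T : tri3) (P : list point) (eps : R) (x y z : point) : Prop :=
  In x P /\ In y P /\ In z P /\ x <> y /\ y <> z /\ x <> z /\
  eps_congruent T eps x y z.

Definition K4minus_free (P : list point) (E : point -> point -> point -> Prop) : Prop :=
  ~ exists f : nat -> point,
      (forall i, (1 <= i <= 4)%nat -> In (f i) P) /\
      (forall i j, (1 <= i <= 4)%nat -> (1 <= j <= 4)%nat -> f i = f j -> i = j) /\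
      E (f 1%nat) (f 2%nat) (f 3%nat) /\
      E (f 1%nat) (f 2%nat) (f 4%nat) /\
      E (f 1%nat) (f 3%nat) (f 4%nat).

Definition K4minus_forbidden (T : tri3) : Prop :=
  exists eps : R, 0 < eps /\
    forall P : list point, NoDup P -> length P = 4%nat ->
      K4minus_free P (HT_edge T P eps).

(* Main.v *)
Require Import Defs.
From Stdlib Require Import Reals List.
From Stdlib Require Import Permutation Lra Psatz.
Open Scope R_scope.
Import ListNotations.

Definition det3s (p q r x y z : R) : R := p*q*r + 2*x*y*z - p*z*z - q*y*y - r*x*x.
Definition Gd (D12 D13 D14 D23 D24 D34 : R) : R :=
  det3s D12 D13 D14 ((D12+D13-D23)/2) ((D12+D14-D24)/2) ((D13+D14-D34)/2).

Lemma Gd_I (A B C : R) : Gd A B C C B A = (A+B-C)*(A-B+C)*(-A+B+C)/2.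
Proof. unfold Gd, det3s. field. Qed.
Lemma Gd_II (X U : R) : Gd X X X U U U = (U/2)^2*(3*X-U).
Proof. unfold Gd, det3s. field. Qed.

Definition sq2 (p q : point) := (fst p - fst q)^2 + (snd p - snd q)^2.
Lemma Gd_planar (p1 p2 p3 p4 : point) :
  Gd (sq2 p1 p2) (sq2 p1 p3) (sq2 p1 p4) (sq2 p2 p3) (sq2 p2 p4) (sq2 p3 p4) = 0.
Proof. destruct p1, p2, p3, p4; unfold Gd, det3s, sq2; simpl. field. Qed.

Lemma mul3_le a b c A B C : 0<=a<=A -> 0<=b<=B -> 0<=c<=C -> a*b*c <= A*B*C.
Proof. intros. apply Rmult_le_compat; try apply Rmult_le_compat; try nra. Qed.

Lemma prod3 L h x1 x2 x3 y1 y2 y3 :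
  Rabs x1 <= L -> Rabs x2 <= L -> Rabs x3 <= L ->
  Rabs y1 <= L -> Rabs y2 <= L -> Rabs y3 <= L ->
  Rabs (x1-y1) <= h -> Rabs (x2-y2) <= h -> Rabs (x3-y3) <= h ->
  Rabs (x1*x2*x3 - y1*y2*y3) <= 3*(L*L*h).
Proof.
  intros.
  replace (x1*x2*x3 - y1*y2*y3) with ((x1-y1)*x2*x3 + (y1*(x2-y2)*x3 + y1*y2*(x3-y3))) by ring.
  eapply Rle_trans; [apply Rabs_triang|].
  eapply Rle_trans; [apply Rplus_le_compat_l; apply Rabs_triang|].
  rewrite !Rabs_mult.
  pose proof (Rabs_pos (x1-y1)); pose proof (Rabs_pos (x2-y2)); pose proof (Rabs_pos (x3-y3));
  pose proof (Rabs_pos x2); pose proof (Rabs_pos x3); pose proof (Rabs_pos y1); pose proof (Rabs_pos y2).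
  assert (Rabs (x1-y1) * Rabs x2 * Rabs x3 <= h*L*L) by (apply mul3_le; lra).
  assert (Rabs y1 * Rabs (x2-y2) * Rabs x3 <= L*h*L) by (apply mul3_le; lra).
  assert (Rabs y1 * Rabs y2 * Rabs (x3-y3) <= L*L*h) by (apply mul3_le; lra).
  nra.
Qed.

Lemma det3s_pert L h p q r x y z p' q' r' x' y' z' :
  Rabs p <= L -> Rabs q <= L -> Rabs r <= L -> Rabs x <= L -> Rabs y <= L -> Rabs z <= L ->
  Rabs p' <= L -> Rabs q' <= L -> Rabs r' <= L -> Rabs x' <= L -> Rabs y' <= L -> Rabs z' <= L ->
  Rabs (p-p') <= h -> Rabs (q-q') <= h -> Rabs (r-r') <= h ->
  Rabs (x-x') <= h -> Rabs (y-y') <= h -> Rabs (z-z') <= h ->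
  Rabs (det3s p q r x y z - det3s p' q' r' x' y' z') <= 18*(L*L*h).
Proof.
  intros. unfold det3s.
  pose proof (prod3 L h p q r p' q' r') as T1.
  pose proof (prod3 L h x y z x' y' z') as T2.
  pose proof (prod3 L h p z z p' z' z') as T3.
  pose proof (prod3 L h q y y q' y' y') as T4.
  pose proof (prod3 L h r x x r' x' x') as T5.
  replace (p * q * r + 2 * x * y * z - p * z * z - q * y * y - r * x * x -
    (p' * q' * r' + 2 * x' * y' * z' - p' * z' * z' - q' * y' * y' - r' * x' * x'))
  with ((p*q*r - p'*q'*r') + 2*(x*y*z - x'*y'*z') - (p*z*z - p'*z'*z') - (q*y*y - q'*y'*y') - (r*x*x-r'*x'*x')) by ring.
  set (a1 := p*q*r - p'*q'*r') in *. set (a2 := x*y*z - x'*y'*z') in *.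
  set (a3 := p*z*z - p'*z'*z') in *. set (a4 := q*y*y - q'*y'*y') in *. set (a5 := r*x*x-r'*x'*x') in *.
  assert (A1 : Rabs a1 <= 3*(L*L*h)) by auto. assert (A2 : Rabs a2 <= 3*(L*L*h)) by auto.
  assert (A3 : Rabs a3 <= 3*(L*L*h)) by auto. assert (A4 : Rabs a4 <= 3*(L*L*h)) by auto.
  assert (A5 : Rabs a5 <= 3*(L*L*h)) by auto.
  clear - A1 A2 A3 A4 A5. revert A1 A2 A3 A4 A5.
  unfold Rabs; repeat destruct Rcase_abs; intros; lra.
Qed.

Lemma absle x a : Rabs x <= a <-> -a <= x <= a.
Proof. unfold Rabs; destruct Rcase_abs; split; intros; lra. Qed.

Lemma Gd_pert M2 eta D12 D13 D14 D23 D24 D34 S12 S13 S14 S23 S24 S34 :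
  0 <= eta <= 1 -> 0 <= M2 ->
  0 <= S12 <= M2 -> 0 <= S13 <= M2 -> 0 <= S14 <= M2 ->
  0 <= S23 <= M2 -> 0 <= S24 <= M2 -> 0 <= S34 <= M2 ->
  Rabs (D12 - S12) <= eta -> Rabs (D13 - S13) <= eta -> Rabs (D14 - S14) <= eta ->
  Rabs (D23 - S23) <= eta -> Rabs (D24 - S24) <= eta -> Rabs (D34 - S34) <= eta ->
  Rabs (Gd D12 D13 D14 D23 D24 D34 - Gd S12 S13 S14 S23 S24 S34)
    <= 36 * ((2*M2+2)*(2*M2+2)*eta).
Proof.
  intros. unfold Gd.
  replace (36 * ((2*M2+2)*(2*M2+2)*eta)) with (18 * ((2*M2+2)*(2*M2+2)*(2*eta))) by ring.
  apply absle in H7; apply absle in H8; apply absle in H9;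
  apply absle in H10; apply absle in H11; apply absle in H12.
  apply det3s_pert; apply absle; lra.
Qed.

Lemma dist2_sym p q : dist2 p q = dist2 q p.
Proof. unfold dist2. f_equal. ring. Qed.

Lemma dist2_pos p q : 0 <= dist2 p q.
Proof. apply sqrt_pos. Qed.

Lemma dist_sq p q : dist2 p q ^ 2 = sq2 p q.
Proof. unfold dist2, sq2. apply pow2_sqrt. apply Rplus_le_le_0_compat; apply pow2_ge_0. Qed.

Lemma sq_le x y : 0<=y -> y^2 >= x^2 -> x <= y.
Proof. intros. destruct (Rle_dec x y). auto. nra. Qed.

Lemma dist2_tri p q r : dist2 p r <= dist2 p q + dist2 q r.
Proof.
  destruct p as [p1 p2], q as [q1 q2], r as [r1 r2]. unfold dist2; cbn [fst snd].
  set (a1 := p1 - q1). set (a2 := p2 - q2). set (b1 := q1 - r1). set (b2 := q2 - r2).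
  replace (p1 - r1) with (a1+b1) by (unfold a1, b1; ring).
  replace (p2 - r2) with (a2+b2) by (unfold a2, b2; ring).
  clearbody a1 a2 b1 b2.
  assert (HY : 0 <= a1^2 + a2^2) by nra. assert (HZ : 0 <= b1^2+b2^2) by nra.
  set (sy := sqrt (a1^2+a2^2)). set (sz := sqrt (b1^2+b2^2)).
  assert (Hy : sy^2 = a1^2+a2^2) by (apply pow2_sqrt; auto).
  assert (Hz : sz^2 = b1^2+b2^2) by (apply pow2_sqrt; auto).
  assert (Hy0 : 0 <= sy) by apply sqrt_pos. assert (Hz0 : 0 <= sz) by apply sqrt_pos.
  clearbody sy sz.
  assert (CS : (sy*sz)^2 >= (a1*b1+a2*b2)^2).
  { replace ((sy*sz)^2) with (sy^2*sz^2) by ring. rewrite Hy, Hz. pose proof (pow2_ge_0 (a1*b2-a2*b1)). nra. }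
  assert (CS2 : a1*b1+a2*b2 <= sy*sz).
  { apply sq_le; auto. apply Rmult_le_pos; auto. }
  rewrite <- (sqrt_pow2 (sy+sz)) by lra.
  apply sqrt_le_1_alt. nra.
Qed.

Lemma dist_4 y z B C : Rabs (dist2 y z - dist2 B C) <= dist2 B y + dist2 C z.
Proof.
  apply absle.
  pose proof (dist2_tri y B z). pose proof (dist2_tri B C z). pose proof (dist2_tri B y C).
  pose proof (dist2_tri y z C).
  rewrite (dist2_sym y B) in *. rewrite (dist2_sym z C) in *. rewrite (dist2_sym y C) in *. lra.
Qed.

Lemma tri_approx T eps x y z :
  eps_congruent T eps x y z ->
  exists s1 s2 s3, Permutation [s1;s2;s3] [sa T; sb T; sc T] /\
    Rabs (dist2 y z - s1) <= 2*(eps * Rmin (sa T) (Rmin (sb T) (sc T))) /\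
    Rabs (dist2 z x - s2) <= 2*(eps * Rmin (sa T) (Rmin (sb T) (sc T))) /\
    Rabs (dist2 x y - s3) <= 2*(eps * Rmin (sa T) (Rmin (sb T) (sc T))).
Proof.
  intros [A [B [C [HP [H1 [H2 H3]]]]]].
  exists (dist2 B C), (dist2 C A), (dist2 A B). split; [exact HP|].
  pose proof (dist_4 y z B C). pose proof (dist_4 z x C A). pose proof (dist_4 x y A B).
  repeat split; eapply Rle_trans; eauto; lra.
Qed.

Lemma perm3 (x y z a b c : R) : Permutation [x;y;z] [a;b;c] ->
  (x=a/\y=b/\z=c) \/ (x=a/\y=c/\z=b) \/ (x=b/\y=a/\z=c) \/ (x=b/\y=c/\z=a) \/
  (x=c/\y=a/\z=b) \/ (x=c/\y=b/\z=a).
Proof.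
  intros HP. assert (Hx : In x [a;b;c]) by (eapply Permutation_in; eauto; simpl; auto).
  simpl in Hx. destruct Hx as [Hx|[Hx|[Hx|[]]]]; subst x.
  - apply (Permutation_cons_app_inv [] [b;c]) in HP; simpl in HP.
    apply Permutation_sym, Permutation_length_2_inv in HP.
    destruct HP as [HP|HP]; injection HP; intros; subst; tauto.
  - apply (Permutation_cons_app_inv [a] [c]) in HP; simpl in HP.
    apply Permutation_sym, Permutation_length_2_inv in HP.
    destruct HP as [HP|HP]; injection HP; intros; subst; tauto.
  - apply (Permutation_cons_app_inv [a;b] []) in HP; simpl in HP.
    apply Permutation_sym, Permutation_length_2_inv in HP.
    destruct HP as [HP|HP]; injection HP; intros; subst; tauto.
Qed.

Lemma perm2 (w y v z : R) : Permutation [w;y] [v;z] -> (w=v/\y=z) \/ (w=z/\y=v).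
Proof.
  intros HP. apply Permutation_length_2_inv in HP.
  destruct HP as [HP|HP]; injection HP; intros; subst; tauto.
Qed.

Lemma combin (x y z u v w : R) (l : list R) :
  Permutation [w;y;x] l -> Permutation [v;z;x] l -> Permutation [u;z;y] l ->
  (x = u /\ y = v /\ z = w) \/ (x = y /\ y = z /\ u = v /\ v = w).
Proof.
  intros P1 P2 P3.
  assert (Q1 : Permutation ([w;y]++[x]) ([v;z]++[x])) by (simpl; eapply Permutation_trans; eauto; apply Permutation_sym; auto).
  apply Permutation_app_inv_r, perm2 in Q1.
  assert (Q2 : Permutation ([w;x]++[y]) ([u;z]++[y])).
  { simpl. apply Permutation_trans with [w;y;x]. apply perm_skip, perm_swap.
    apply Permutation_trans with l; auto. apply Permutation_trans with [u;z;y]; [apply Permutation_sym; auto|].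
    apply Permutation_refl. }
  apply Permutation_app_inv_r, perm2 in Q2.
  assert (Q3 : Permutation ([v;x]++[z]) ([u;y]++[z])).
  { simpl. apply Permutation_trans with [v;z;x]. apply perm_skip, perm_swap.
    apply Permutation_trans with l; auto. apply Permutation_trans with [u;z;y]; [apply Permutation_sym; auto|].
    apply perm_skip, perm_swap. }
  apply Permutation_app_inv_r, perm2 in Q3.
  destruct Q1 as [[]|[]]; destruct Q2 as [[]|[]]; destruct Q3 as [[]|[]];
  first [left; repeat split; lra | right; repeat split; lra].
Qed.

Lemma small_eps (K Bd : R) (l : list R) : 0 < K -> 0 < Bd ->
  exists e, 0 < e /\ e <= Bd /\ forall v, In v l -> v <> 0 -> K*e < Rabs v.
Proof.
  intros HK HB. induction l as [|v l IH].
  - exists Bd. split; [auto|split; [lra|intros v []]].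
  - destruct IH as [e [He [HeB Hl]]].
    destruct (Req_dec v 0) as [Hv|Hv].
    + exists e. repeat split; auto. intros w [<-|Hw] Hw0; [contradiction|auto].
    + pose proof (Rabs_pos_lt v Hv) as Hav.
      exists (Rmin e (Rabs v / (2*K))). repeat split.
      * apply Rmin_glb_lt; auto. apply Rdiv_lt_0_compat; lra.
      * eapply Rle_trans; [apply Rmin_l|auto].
      * intros w [Hw|Hw] Hw0.
        -- subst w. pose proof (Rmin_r e (Rabs v / (2*K))).
           assert (K * Rmin e (Rabs v / (2 * K)) <= K * (Rabs v / (2*K))) by (apply Rmult_le_compat_l; lra).
           replace (K * (Rabs v / (2*K))) with (Rabs v / 2) in H0 by (field; lra). lra.
        -- pose proof (Rmin_l e (Rabs v / (2*K))).
           assert (K * Rmin e (Rabs v / (2 * K)) <= K * e) by (apply Rmult_le_compat_l; lra).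
           specialize (Hl w Hw Hw0). lra.
Qed.

Definition Qs x y z := (x^2+y^2-z^2)*(x^2-y^2+z^2)*(-x^2+y^2+z^2).

Lemma Qs_perm x y z a b c : Permutation [z;y;x] [a;b;c] -> Qs x y z = Qs a b c.
Proof.
  intros HP. apply perm3 in HP.
  destruct HP as [[?[??]]|[[?[??]]|[[?[??]]|[[?[??]]|[[?[??]]|[?[??]]]]]]]; subst; unfold Qs; ring.
Qed.

Lemma deg90 : deg 90 = PI/2.
Proof. unfold deg. field. Qed.

Lemma right_of_Q T : is_triangle T -> Qs (sa T) (sb T) (sc T) = 0 -> has_right_angle T.
Proof.
  intros [Ha [Hb [Hc _]]] HQ. unfold Qs in HQ. unfold has_right_angle, angA, angB, angC.
  rewrite deg90, <- acos_0.
  apply Rmult_integral in HQ. destruct HQ as [HQ|HQ].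
  - apply Rmult_integral in HQ. destruct HQ as [HQ|HQ].
    + right; right. f_equal. replace (sa T ^ 2 + sb T ^ 2 - sc T ^ 2) with 0 by lra. field. lra.
    + right; left. f_equal. replace (sa T ^ 2 + sc T ^ 2 - sb T ^ 2) with 0 by lra. field. lra.
  - left. f_equal. replace (sb T ^ 2 + sc T ^ 2 - sa T ^ 2) with 0 by lra. field. lra.
Qed.

Lemma acos120 x u : 0 < x -> u^2 = 3*x^2 -> acos ((x^2 + x^2 - u^2)/(2*x*x)) = deg 120.
Proof.
  intros Hx Hu. replace ((x^2 + x^2 - u^2)/(2*x*x)) with (-1/2) by (rewrite Hu; field; lra).
  rewrite <- cos_2PI3. rewrite acos_cos. unfold deg; field.
  pose proof PI_RGT_0. lra.
Qed.

Lemma acos30 x u : 0 < x -> 0 < u -> u^2 = 3*x^2 -> acos ((u^2 + x^2 - x^2)/(2*u*x)) = deg 30.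
Proof.
  intros Hx Hu0 Hu.
  assert (Hs : u = sqrt 3 * x).
  { rewrite <- (sqrt_pow2 u) by lra. rewrite Hu. rewrite sqrt_mult. rewrite sqrt_pow2. reflexivity. lra. lra. apply pow2_ge_0. }
  assert (H3 : 0 < sqrt 3) by (apply sqrt_lt_R0; lra).
  replace ((u^2 + x^2 - x^2)/(2*u*x)) with (sqrt 3/2) by (rewrite Hs; field; repeat split; lra).
  rewrite <- cos_PI6. rewrite acos_cos. unfold deg; field.
  pose proof PI_RGT_0. lra.
Qed.

Lemma acos30' x u : 0 < x -> 0 < u -> u^2 = 3*x^2 -> acos ((x^2 + u^2 - x^2)/(2*x*u)) = deg 30.
Proof.
  intros. rewrite <- (acos30 x u) by auto. f_equal. field. lra.
Qed.

Lemma type_of T u x : is_triangle T -> Permutation [u;x;x] [sa T; sb T; sc T] ->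
  u^2 = 3*x^2 -> of_type T 120 30 30.
Proof.
  intros [Ha [Hb [Hc _]]] HP Hu. unfold of_type.
  apply perm3 in HP.
  assert (Hx : 0 < x) by (destruct HP as [[?[??]]|[[?[??]]|[[?[??]]|[[?[??]]|[[?[??]]|[?[??]]]]]]]; subst; lra).
  assert (Hu0 : 0 < u) by (destruct HP as [[?[??]]|[[?[??]]|[[?[??]]|[[?[??]]|[[?[??]]|[?[??]]]]]]]; subst; lra).
  exists (deg 120), (deg 30), (deg 30). split; [|repeat split].
  unfold angA, angB, angC.
  destruct HP as [[?[??]]|[[?[??]]|[[?[??]]|[[?[??]]|[[?[??]]|[?[??]]]]]]];
  rewrite <- ?H, <- ?H0, <- ?H1.
  all: rewrite ?acos120, ?acos30, ?acos30' by auto;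
    first [apply Permutation_refl | apply perm_swap | apply Permutation_sym, Permutation_cons_append].
Qed.

Definition g2 x u := (u^2/2)^2*(3*x^2-u^2).
Definition lst a b c := [a-b; a-c; b-a; b-c; c-a; c-b; Qs a b c / 2;
  g2 a a; g2 a b; g2 a c; g2 b a; g2 b b; g2 b c; g2 c a; g2 c b; g2 c c].

Lemma in_g2 a b c x u : In x [a;b;c] -> In u [a;b;c] -> In (g2 x u) (lst a b c).
Proof.
  intros Hx Hu. simpl in Hx, Hu.
  destruct Hx as [<-|[<-|[<-|[]]]]; destruct Hu as [<-|[<-|[<-|[]]]]; unfold lst; simpl; tauto.
Qed.

Lemma in_gap a b c s s' : In s [a;b;c] -> In s' [a;b;c] -> s <> s' -> In (s - s') (lst a b c).
Proof.
  intros Hx Hu Hne. simpl in Hx, Hu.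
  destruct Hx as [<-|[<-|[<-|[]]]]; destruct Hu as [<-|[<-|[<-|[]]]];
  try (exfalso; apply Hne; reflexivity); unfold lst; simpl; tauto.
Qed.

Lemma sq_close d s h M : 0 <= d -> 0 <= s <= M -> 0 <= h <= 1 -> Rabs (d - s) <= h ->
  Rabs (d^2 - s^2) <= h*(2*M+1).
Proof.
  intros Hd Hs Hh H. apply absle in H.
  replace (d^2 - s^2) with ((d-s)*(d+s)) by ring. rewrite Rabs_mult.
  rewrite (Rabs_right (d+s)) by lra.
  apply Rmult_le_compat; try lra. apply Rabs_pos. apply absle; lra.
Qed.

Lemma in_pos T s : is_triangle T -> In s [sa T; sb T; sc T] ->
  0 <= s <= sa T + sb T + sc T.
Proof.
  intros [Ha [Hb [Hc _]]] H. simpl in H. destruct H as [<-|[<-|[<-|[]]]]; lra.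
Qed.

Theorem lemma2p9 (T : tri3) :
  is_triangle T ->
  ~ has_right_angle T ->
  ~ of_type T 120 30 30 ->
  K4minus_forbidden T.
Proof.
  intros HT HR HO.
  pose proof HT as [Ha [Hb [Hc _]]].
  remember (Rmin (sa T) (Rmin (sb T) (sc T))) as m eqn:Hm.
  assert (Hm0 : 0 < m) by (subst m; repeat apply Rmin_glb_lt; auto).
  remember (sa T + sb T + sc T) as M eqn:HM.
  assert (HM0 : 0 < M) by lra.
  remember (2*(M*M)+2) as L eqn:HL.
  assert (HL0 : 0 < L) by nra.
  remember (4*m + 72*(L*L)*(2*M+1)*m) as K eqn:HK.
  assert (HK0 : 0 < K).
  { subst K. assert (0 < 72*(L*L)*(2*M+1)*m) by (apply Rmult_lt_0_compat; [|lra]; apply Rmult_lt_0_compat; nra). lra. }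
  destruct (small_eps K (1/(2*m*(2*M+1))) (lst (sa T) (sb T) (sc T)) HK0) as [e [He [HeB Hl]]].
  { apply Rdiv_lt_0_compat; [lra|]. apply Rmult_lt_0_compat; lra. }
  exists e. split; auto.
  intros P _ _ [f [_ [_ [E1 [E2 E3]]]]].
  destruct E1 as [_ [_ [_ [_ [_ [_ E1]]]]]].
  destruct E2 as [_ [_ [_ [_ [_ [_ E2]]]]]].
  destruct E3 as [_ [_ [_ [_ [_ [_ E3]]]]]].
  apply tri_approx in E1 as [s1 [s2 [s3 [P1 [H1 [H2 H3]]]]]].
  apply tri_approx in E2 as [t1 [t2 [t3 [P2 [G1 [G2 G3]]]]]].
  apply tri_approx in E3 as [u1 [u2 [u3 [P3 [J1 [J2 J3]]]]]].
  rewrite <- Hm in *.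
  remember (2*(e*m)) as h eqn:Hh.
  assert (Hh0 : 0 <= h) by nra.
  assert (HhM : h*(2*M+1) <= 1).
  { subst h. apply Rmult_le_compat_r with (r := 2*M+1) in HeB; [|lra].
    replace (1 / (2 * m * (2 * M + 1)) * (2 * M + 1)) with (1/(2*m)) in HeB by (field; lra).
    apply Rmult_le_compat_l with (r := 2*m) in HeB; [|lra].
    replace (2 * m * (1 / (2 * m))) with 1 in HeB by (field; lra). nra. }
  assert (Hh1 : h <= 1) by nra.
  assert (Hgap : forall s s' d, In s [sa T; sb T; sc T] -> In s' [sa T; sb T; sc T] ->
            Rabs (d - s) <= h -> Rabs (d - s') <= h -> s = s').
  { intros s s' d Hs Hs' Hd Hd'. destruct (Req_dec s s') as [|Hne]; auto. exfalso.
    assert (Hin := in_gap _ _ _ _ _ Hs Hs' Hne).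
    assert (Hne0 : s - s' <> 0) by lra.
    specialize (Hl _ Hin Hne0).
    apply absle in Hd; apply absle in Hd'.
    assert (Rabs (s - s') <= 2*h) by (apply absle; lra).
    assert (2*h <= K*e).
    { subst h K. assert (0 <= 72*(L*L)*(2*M+1)*m*e) by (apply Rmult_le_pos; [|lra]; apply Rmult_le_pos; [|lra]; apply Rmult_le_pos; nra). nra. }
    lra. }
  assert (Hin : forall s (l : list R), Permutation l [sa T; sb T; sc T] -> In s l -> In s [sa T; sb T; sc T]).
  { intros s l Hp Hs. eapply Permutation_in; eauto. }
  assert (Et3 : t3 = s3) by (apply (Hgap _ _ (dist2 (f 1%nat) (f 2%nat))); eauto; [eapply Hin; [exact P2|simpl; tauto]|eapply Hin; [exact P1|simpl; tauto]]).
  assert (Eu2 : u2 = t2) by (apply (Hgap _ _ (dist2 (f 4%nat) (f 1%nat))); eauto; [eapply Hin; [exact P3|simpl; tauto]|eapply Hin; [exact P2|simpl; tauto]]).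
  rewrite (dist2_sym (f 3%nat) (f 1%nat)) in H2.
  assert (Eu3 : u3 = s2) by (apply (Hgap _ _ (dist2 (f 1%nat) (f 3%nat))); eauto; [eapply Hin; [exact P3|simpl; tauto]|eapply Hin; [exact P1|simpl; tauto]]).
  subst t3 u2 u3.
  rewrite (dist2_sym (f 4%nat) (f 1%nat)) in G2.
  assert (Hb3 := in_pos T s3 HT ltac:(eapply Hin; [exact P1|simpl; tauto])).
  assert (Hb2 := in_pos T s2 HT ltac:(eapply Hin; [exact P1|simpl; tauto])).
  assert (Hb1 := in_pos T s1 HT ltac:(eapply Hin; [exact P1|simpl; tauto])).
  assert (Hbt1 := in_pos T t1 HT ltac:(eapply Hin; [exact P2|simpl; tauto])).
  assert (Hbt2 := in_pos T t2 HT ltac:(eapply Hin; [exact P2|simpl; tauto])).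
  assert (Hbu1 := in_pos T u1 HT ltac:(eapply Hin; [exact P3|simpl; tauto])).
  rewrite <- HM in *.
  set (p1 := f 1%nat) in *. set (p2 := f 2%nat) in *. set (p3 := f 3%nat) in *. set (p4 := f 4%nat) in *.
  assert (Hpl := Gd_planar p1 p2 p3 p4).
  rewrite <- !dist_sq in Hpl.
  assert (Hpert := Gd_pert (M*M) (h*(2*M+1))
    (dist2 p1 p2 ^2) (dist2 p1 p3 ^2) (dist2 p1 p4 ^2) (dist2 p2 p3 ^2) (dist2 p2 p4 ^2) (dist2 p3 p4 ^2)
    (s3^2) (s2^2) (t2^2) (s1^2) (t1^2) (u1^2)).
  rewrite Hpl in Hpert. rewrite <- HL in Hpert.
  assert (Hbig : forall v, 0 <= v <= M -> 0 <= v^2 <= M*M) by (intros; split; nra).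
  specialize (Hpert ltac:(split; nra) ltac:(nra)
     (Hbig _ Hb3) (Hbig _ Hb2) (Hbig _ Hbt2) (Hbig _ Hb1) (Hbig _ Hbt1) (Hbig _ Hbu1)).
  specialize (Hpert ltac:(apply sq_close; auto; apply dist2_pos)).
  specialize (Hpert ltac:(apply sq_close; auto; apply dist2_pos)).
  specialize (Hpert ltac:(apply sq_close; auto; apply dist2_pos)).
  specialize (Hpert ltac:(apply sq_close; auto; apply dist2_pos)).
  specialize (Hpert ltac:(apply sq_close; auto; apply dist2_pos)).
  specialize (Hpert ltac:(apply sq_close; auto; apply dist2_pos)).
  rewrite Rabs_minus_sym, Rminus_0_r in Hpert.
  assert (HKe : 36 * (L * L * (h * (2 * M + 1))) <= K*e).
  { subst h K. nra. }
  destruct (combin s3 s2 t2 u1 t1 s1 _ P1 P2 P3) as [[E1 [E2 E3]]|[E1 [E2 [E3 E4]]]].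
  - (* rectangle *)
    rewrite <- E1, <- E2, <- E3 in Hpert. rewrite Gd_I in Hpert.
    replace ((s3 ^ 2 + s2 ^ 2 - t2 ^ 2) * (s3 ^ 2 - s2 ^ 2 + t2 ^ 2) * (- s3 ^ 2 + s2 ^ 2 + t2 ^ 2) / 2)
      with (Qs s3 s2 t2 / 2) in Hpert by (unfold Qs; ring).
    rewrite (Qs_perm s3 s2 t2 (sa T) (sb T) (sc T)) in Hpert by (rewrite E3; exact P1).
    assert (Hnz : Qs (sa T) (sb T) (sc T) / 2 <> 0).
    { intro Hz. apply HR. apply right_of_Q; auto. lra. }
    specialize (Hl (Qs (sa T) (sb T) (sc T) / 2) ltac:(unfold lst; simpl; tauto) Hnz). lra.
  - (* star *)
    rewrite <- E2 in Hpert; rewrite <- E1 in Hpert; rewrite <- E4 in Hpert; rewrite <- E3 in Hpert.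
    rewrite Gd_II in Hpert.
    rewrite <- E4 in P1; rewrite <- E3 in P1; rewrite <- E1 in P1.
    replace ((u1 ^ 2 / 2) ^ 2 * (3 * s3 ^ 2 - u1 ^ 2)) with (g2 s3 u1) in Hpert by reflexivity.
    assert (Hnz : g2 s3 u1 <> 0).
    { intro Hz. unfold g2 in Hz. apply Rmult_integral in Hz. destruct Hz as [Hz|Hz].
      - assert (0 < u1) by (assert (Hu := Hin u1 _ P1 ltac:(simpl; tauto)); simpl in Hu; destruct Hu as [<-|[<-|[<-|[]]]]; lra).
        assert (0 < u1^2) by (apply pow_lt; lra). assert (0 < (u1^2/2)^2) by (apply pow_lt; lra). lra.
      - apply HO. apply (type_of T u1 s3); auto. lra. }
    specialize (Hl _ (in_g2 _ _ _ s3 u1 (Hin s3 _ P1 ltac:(simpl; tauto)) (Hin u1 _ P1 ltac:(simpl; tauto))) Hnz). lra.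
Qed.
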